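(* Let $n, r \geq 1$ and $q \geq 0$ be integers and let $\epsilon \in F(r,n)$ with $|\epsilon| = n$. Then \[(-1)^{n-r}\sum_{s_1, \ldots, s_r \geq 0} (-1)^{\sum_i s_i} \binom{n}{q - \sum_i s_i} \prod_{i=1}^r \left((s_i+1)^{\epsilon(i)} - s_i^{\epsilon(i)}\right) = (-1)^{n-q-r} \sum_{\substack{t \in F(r,q) \\ |t| = q}} \prod_{i=1}^r E(\epsilon(i), t(i)).\]
   Context: $F(r,k)$ denotes the set of functions $\epsilon: \{1,\ldots,r\} \to \{0,\ldots,k\}$, $|\epsilon| = \sum_i \epsilon(i)$. $E(m,j)$ is the Eulerian number (number of permutations of $\{1,\ldots,m\}$ with exactly $j$ descents) for $m \geq 1$, with $E(m,j) = 0$ if $m \leq 0$ or $j \notin\{0,\ldots,m-1\}$. Binomial coefficients $\binom{n}{j}$ vanish for $j<0$ or $j > n$, and $0^0 = 1$. *)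

(* Defs.v *)
From mathcomp Require Import all_boot all_order all_algebra all_fingroup.
Set Implicit Arguments. Unset Strict Implicit. Unset Printing Implicit Defensive.
Import GRing.Theory Num.Theory.
Local Open Scope ring_scope.

Definition descents (m : nat) (s : 'S_m) : nat :=
  #|[set p : 'I_m * 'I_m | (val p.2 == (val p.1).+1)%N && (s p.2 < s p.1)%N]|.

(* Eulerian number E(m,j); E(0,j) = 0 by the paper's convention. *)
Definition Eulerian (m j : nat) : nat :=
  if m == 0%N then 0%N else #|[set s : 'S_m | descents s == j]|.

(* Binomial coefficient with integer lower index, vanishing for k < 0
   (and for k > n, as 'C already does). *)
Definition binz (n : nat) (k : int) : int :=
  if (k < 0) then 0 else ('C(n, `|k|%N))%:Z.

(* Main.v *)
Require Import Defs.
From mathcomp Require Import all_boot all_order all_algebra all_fingroup.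
From mathcomp Require Import ring zify.
Import GRing.Theory Num.Theory.
Set Implicit Arguments. Unset Strict Implicit. Unset Printing Implicit Defensive.
Local Open Scope ring_scope.

Definition nf m (s : 'S_m) (i : nat) : nat :=
  oapp (fun j : 'I_m => val (s j)) 0%N (insub i).

Lemma nfE m (s : 'S_m) (j : 'I_m) : nf s j = s j.
Proof. by rewrite /nf valK. Qed.

Definition dsum (g : nat -> nat) (k : nat) : nat :=
  (\sum_(0 <= i < k) (g i.+1 < g i))%N.

Lemma descentsE m (s : 'S_m) : descents s = dsum (nf s) m.-1.
Proof.
rewrite /descents -sum1_card.
rewrite (big_mkcond (fun p => p \in _)) /=.
set A := [set p : 'I_m * 'I_m | _].
have -> : (\sum_(p : 'I_m * 'I_m) (if p \in A then 1 else 0))%N =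
  (\sum_(a : 'I_m) \sum_(b : 'I_m) (if (a, b) \in A then 1 else 0))%N.
  by rewrite pair_bigA; apply: eq_bigr => -[a b].
have inner : forall a : 'I_m,
  (\sum_(b : 'I_m) (if (a, b) \in A then 1%N else 0%N))%N = ((a.+1 < m) && (nf s a.+1 < nf s a))%N.
  move=> a; case: (ltnP a.+1 m) => h.
    rewrite (bigD1 (Ordinal h)) //= big1 ?addn0.
      by rewrite /A inE /= eqxx /= -!nfE /=; case: ifP.
    move=> b hb; rewrite /A inE /=.
    have /negbTE -> : val b != a.+1.
      by apply: contra hb => /eqP hb'; apply/eqP/val_inj.
    by [].
  rewrite big1 //= => b _; rewrite /A inE /=.
  have /negbTE -> // : val b != a.+1.
  by apply/eqP => hb'; have := ltn_ord b; rewrite hb' ltnNge h.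
rewrite (eq_bigr _ (fun a _ => inner a)).
rewrite -(big_mkord xpredT (fun a => nat_of_bool ((a.+1 < m) && (nf s a.+1 < nf s a))%N)).
clear inner A; case: m s => [|m] s; first by rewrite /dsum !big_geq.
rewrite big_nat_recr //= ltnn /= addn0 /dsum.
by apply: eq_big_nat => i /andP[_ hi]; rewrite ltnS hi.
Qed.

Lemma bump_lt p i : (i < p)%N -> bump p i = i.
Proof. by rewrite /bump => h; rewrite leqNgt h. Qed.
Lemma bump_ge p i : (p <= i)%N -> bump p i = i.+1.
Proof. by rewrite /bump => ->. Qed.

Definition delta (g : nat -> nat) m p : bool :=
  (p != m) && ((p == 0%N) || ~~ (g p < g p.-1)%N).

Lemma dsum_ins (g G : nat -> nat) m p : (p <= m)%N ->
  (forall i, i < m -> g i < m)%N ->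
  G p = m -> (forall i, i < m -> G (bump p i) = g i)%N ->
  dsum G m = (dsum g m.-1 + delta g m p)%N.
Proof.
move=> hpm hg hGp hGb; rewrite /delta.
case: (eqVneq p m) => [epm|npm] /=.
  subst p; case: m hg hGp hGb {hpm} => [|m] hg hGp hGb; first by rewrite /dsum !big_geq.
  rewrite /dsum big_nat_recr //= hGp.
  have -> : G m = g m by rewrite -(hGb m) // bump_lt.
  rewrite ltnNge ltnW ?hg // addn0 addn0.
  apply: eq_big_nat => i /andP[_ hi].
  by rewrite -(hGb i) ?bump_lt ?(ltn_trans hi) // -(hGb i.+1) ?bump_lt.
have hpm' : (p < m)%N by rewrite ltn_neqAle npm hpm.
case: (eqVneq p 0%N) => [p0|pn0] /=.
  subst p; case: m hg hGp hGb hpm hpm' npm => [|m] // hg hGp hGb _ _ _.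
  rewrite /dsum big_nat_recl //= hGp.
  have -> : G 1%N = g 0%N by rewrite -(hGb 0%N).
  rewrite hg // add1n addn1; congr _.+1.
  apply: eq_big_nat => i /andP[_ hi].
  by rewrite -(hGb i) ?bump_ge ?(ltn_trans hi) // -(hGb i.+1) ?bump_ge.
case: p pn0 hpm hpm' hGp hGb npm => [|p] // _ hpm hpm' hGp hGb _.
case: m hg hpm hpm' hGp hGb => [|m] // hg hpm hpm' hGp hGb /=.
rewrite /dsum (big_cat_nat _ (n := p)) //=; last exact: ltnW.
rewrite (big_ltn hpm) (big_ltn hpm').
rewrite [X in (_ = X + _)%N](big_cat_nat _ (n := p)) //=.
rewrite (big_ltn (hpm' : (p < m)%N)).
have Hlt : forall i, (i < p.+1)%N -> G i = g i.
  by move=> i hi; rewrite -(hGb i) ?bump_lt //; lia.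
have Hge : forall i, (p.+1 <= i)%N -> (i < m.+1)%N -> G i.+1 = g i.
  by move=> i hi hi'; rewrite -(hGb i) ?bump_ge.
have EA : (\sum_(0 <= i < p) (G i.+1 < G i))%N = (\sum_(0 <= i < p) (g i.+1 < g i))%N.
  by apply: eq_big_nat => i /andP[_ hi]; rewrite !Hlt //; lia.
have EB : (\sum_(p.+2 <= i < m.+1) (G i.+1 < G i))%N = (\sum_(p.+1 <= i < m) (g i.+1 < g i))%N.
  by rewrite big_add1 /=; apply: eq_big_nat => i /andP[hi1 hi2]; rewrite !Hge //; lia.
rewrite EA EB hGp (Hlt p) // (Hge p.+1) //.
rewrite ltnNge ltnW ?hg //; last lia.
Qed.
Lemma sum_delta g m : (\sum_(p < m.+1) delta g m p + dsum g m.-1)%N = m.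
Proof.
rewrite -(big_mkord xpredT (fun p => nat_of_bool (delta g m p))).
case: m => [|m]; first by rewrite /dsum big_nat1 big_geq.
rewrite big_nat_recr //= big_nat_recl //= /delta /= eqxx /= addn0.
have -> : (\sum_(0 <= i < m) ((i.+1 != m.+1) && ((i.+1 == 0%N) || ~~ (g i.+1 < g i.+1.-1)%N)))%N
   = (\sum_(0 <= i < m) ~~ (g i.+1 < g i)%N)%N.
  apply: eq_big_nat => i /andP[_ hi] /=.
  by have -> : (i.+1 != m.+1) by rewrite eqSS; apply/eqP => e; rewrite e ltnn in hi.
rewrite /dsum -addnA -big_split /=.
rewrite (eq_big_nat _ _ (F2 := fun _ => 1%N)); last by move=> i _; case: (g i.+1 < g i)%N.
by rewrite sum_nat_const_nat muln1 subn0 add1n.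
Qed.

Definition ins m (x : 'S_m * 'I_m.+1) : 'S_m.+1 := lift_perm x.2 ord_max x.1.

Lemma ins_inj m : injective (@ins m).
Proof.
move=> [w p] [w' p'] /= E; rewrite /ins /= in E.
have ep : p = p'.
  apply: (@perm_inj _ (lift_perm p' ord_max w')).
  by rewrite lift_perm_id -E lift_perm_id.
subst p'; congr (_, _); apply/permP => k.
apply: (@lift_inj _ ord_max); by rewrite -!(lift_perm_lift p) E.
Qed.

Lemma ins_bij m : bijective (@ins m).
Proof.
apply: inj_card_bij; first exact: ins_inj.
by rewrite card_prod !card_Sn card_ord factS mulnC.
Qed.

Lemma descents_ins m (w : 'S_m) (p : 'I_m.+1) :
  descents (ins (w, p)) = (descents w + delta (nf w) m p)%N.
Proof.
rewrite !descentsE /=.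
apply: dsum_ins.
- by rewrite -ltnS.
- move=> i hi; have := nfE w (Ordinal hi); rewrite /= => ->; exact: ltn_ord.
- by rewrite nfE /ins /= lift_perm_id.
- move=> i hi.
  have -> : bump p i = lift p (Ordinal hi) by [].
  rewrite nfE /ins /= lift_perm_lift /= -[i in RHS]/(nat_of_ord (Ordinal hi)) nfE.
  by rewrite /bump leqNgt ltn_ord.
Qed.

Definition Apoly m : {poly int} := \sum_(s : 'S_m) 'X^(descents s).

Lemma descents_le m (w : 'S_m) : (descents w <= m)%N.
Proof. have := sum_delta (nf w) m; rewrite -descentsE; lia. Qed.

Lemma Xbool (b : bool) : ('X^b : {poly int}) = 1 + (b : nat)%:R * ('X - 1).
Proof. by case: b; rewrite ?expr0 ?expr1 /= ?mul0r ?mul1r ?addr0 // addrC subrK. Qed.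

Lemma deriv_sumr I (r : seq I) (F : I -> {poly int}) :
  (\sum_(i <- r) F i)^`() = \sum_(i <- r) (F i)^`().
Proof.
elim: r => [|a r IH]; first by rewrite !big_nil deriv0.
by rewrite !big_cons derivD IH.
Qed.

Lemma recA m : Apoly m.+1 = (1 + m%:R * 'X) * Apoly m + 'X * (1 - 'X) * (Apoly m)^`().
Proof.
rewrite /Apoly (reindex (@ins m)) /=; last by apply: onW_bij; exact: ins_bij.
rewrite (eq_bigr (fun x : 'S_m * 'I_m.+1 => 'X^(descents x.1 + delta (nf x.1) m x.2))); last first.
  by move=> [w p] _; rewrite descents_ins.
rewrite -(pair_bigA _ (fun (w : 'S_m) (p : 'I_m.+1) => 'X^(descents w + delta (nf w) m p))) /=.
rewrite deriv_sumr !mulr_sumr -big_split /=.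
apply: eq_bigr => w _.
set d := descents w.
have hd : (d <= m)%N by apply: descents_le.
have hs : (\sum_(p < m.+1) delta (nf w) m p)%N = (m - d)%N.
  by have := sum_delta (nf w) m; rewrite -descentsE -/d; lia.
under eq_bigr do rewrite exprD Xbool.
rewrite -mulr_sumr big_split /= sumr_const card_ord -mulr_suml -natr_sum hs.
rewrite derivXn.
have -> : 'X * (1 - 'X) * ('X^(d.-1) *+ d) = (1 - 'X) * ('X^d *+ d) :> {poly int}.
  case: (d) => [|d']; first by rewrite !mulr0n !mulr0.
  by rewrite /= mulrnAr mulrnAr exprS; congr (_ *+ _); ring.
rewrite natrB // -mulr_natr -addn1 natrD.
ring.
Qed.

Definition Spoly K m : {poly int} := \sum_(s < K) ((s.+1)%:Z ^+ m) *: 'X^s.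

Lemma SpolyS K m : Spoly K m.+1 = Spoly K m + 'X * (Spoly K m)^`().
Proof.
rewrite /Spoly deriv_sumr mulr_sumr -big_split /=; apply: eq_bigr => -[s hs] _ /=.
rewrite derivZ derivXn -!mul_polyC.
case: s hs => [|s] hs /=.
  by rewrite !mulr0n !mulr0 addr0 !expr1n.
rewrite -[Posz s.+2]natz !rmorphXn /= !rmorph_nat exprS -[_ *+ s.+1]mulr_natr exprS.
ring.
Qed.

Definition cong K (p q : {poly int}) := exists g, p = q + 'X^K * g.

Lemma cong_refl K p : cong K p p.
Proof. by exists 0; rewrite mulr0 addr0. Qed.

Lemma congM K p p' q q' : cong K p p' -> cong K q q' -> cong K (p * q) (p' * q').
Proof.
move=> [g ->] [h ->]; exists (g * q' + p' * h + 'X^K * g * h); ring.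
Qed.

Lemma cong_prod r K (p q : 'I_r -> {poly int}) :
  (forall i, cong K (p i) (q i)) -> cong K (\prod_i p i) (\prod_i q i).
Proof.
move=> H; apply: (big_rec2 (cong K)); first exact: cong_refl.
by move=> i y1 y2 _ Hy; apply: congM.
Qed.

Lemma cong_coef K p q k : cong K p q -> (k < K)%N -> p`_k = q`_k.
Proof. by move=> [g ->] hk; rewrite coefD coefXnM hk addr0. Qed.

Lemma geom k : (1 - 'X) * \sum_(s < k) 'X^s = 1 - 'X^k :> {poly int}.
Proof.
elim: k => [|k IH]; first by rewrite big_ord0 mulr0 expr0 subrr.
rewrite big_ord_recr /= mulrDr IH exprS; ring.
Qed.

Lemma Apoly0 : Apoly 0 = 1.
Proof.
rewrite /Apoly (eq_bigr (fun _ => 1)); last first.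
  by move=> s _; rewrite descentsE /dsum big_geq // expr0.
by rewrite sumr_const card_Sn.
Qed.

Lemma lemB k m : cong k.+1 ((1 - 'X)^+m.+1 * Spoly k.+1 m) (Apoly m).
Proof.
elim: m => [|m [g Hg]].
  exists (-1); rewrite Apoly0 expr1 /Spoly (eq_bigr (fun s : 'I_k.+1 => 'X^s)).
    by rewrite geom; ring.
  by move=> s _; rewrite expr0 scale1r.
set S := Spoly k.+1 m in Hg *.
set A := Apoly m in Hg *.
have Hd := congr1 deriv Hg.
rewrite derivM deriv_exp derivD derivM derivXn /= in Hd.
rewrite SpolyS recA -/S -/A.
have HA : A = (1 - 'X) ^+ m.+1 * S - 'X^(k.+1) * g by rewrite Hg addrK.
have HA' : A^`() = (1 - 'X)^`() * (1 - 'X) ^+ m *+ m.+1 * S + (1 - 'X) ^+ m.+1 * S^`()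
   - (('X^k) *+ k.+1 * g + 'X^(k.+1) * g^`()) by rewrite Hd addrK.
rewrite HA' HA.
exists ((1 + m%:R * 'X) * g + (1 - 'X) * (k.+1%:R * g + 'X * g^`())).
rewrite derivB derivC derivX sub0r.
rewrite -[_ *+ m.+1]mulr_natr -[_ *+ k.+1]mulr_natr !exprS.
ring.
Qed.

Definition Sp K e : {poly int} := \sum_(s < K) ((s.+1)%:Z ^+ e - (s : nat)%:Z ^+ e) *: 'X^s.
Definition Ap e : {poly int} := if e is 0 then 0 else Apoly e.

Lemma coord k e : cong k.+1 ((1 - 'X)^+e * Sp k.+1 e) (Ap e).
Proof.
case: e => [|m].
  rewrite /Sp big1 ?mulr0; first exact: cong_refl.
  by move=> s _; rewrite !expr0 subrr scale0r.
have ES : Sp k.+1 m.+1 = (1 - 'X) * Spoly k.+1 m.+1 + ((k.+1)%:Z ^+ m.+1) *: 'X^(k.+1).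
  rewrite /Sp /Spoly.
  under eq_bigr do rewrite scalerBl.
  rewrite sumrB [X in _ - X]big_ord_recl.
  have -> : (((@ord0 k : nat)%:Z ^+ m.+1) *: 'X^(@ord0 k) : {poly int}) = 0.
    by rewrite exprS mul0r scale0r.
  rewrite add0r.
  rewrite [X in _ - X = _](eq_bigr (fun i : 'I_k => 'X * (((i.+1)%:Z ^+ m.+1) *: 'X^i))); last first.
    by move=> i _; rewrite lift0 -scalerAr -exprS.
  rewrite -mulr_sumr big_ord_recr /=.
  set T := \sum_(i < k) _.
  rewrite (exprS 'X) -!mul_polyC; ring.
have [g Hg] := lemB k m.+1.
exists (g + ((k.+1)%:Z ^+ m.+1)%:P * (1 - 'X)^+m.+1).
rewrite ES /= mulrDr mulrA -exprSr Hg -mul_polyC; ring.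
Qed.

Lemma coef1X n i : ((1 - 'X)^+n : {poly int})`_i = (-1)^+i * ('C(n, i))%:R.
Proof.
elim: n i => [|n IH] i.
  by rewrite expr0 coef1 bin0n; case: i => [|i] //=; rewrite mulr0.
rewrite exprS mulrBl mul1r coefB coefXM IH.
case: i => [|i] /=; first by rewrite !bin0 subr0.
by rewrite IH binS natrD exprS; ring.
Qed.

Lemma coef_prod_expand r K (F : 'I_r -> 'I_K -> int) (P : {poly int}) k :
  (P * \prod_(i < r) \sum_(j < K) F i j *: 'X^j)`_k =
  \sum_(f : {ffun 'I_r -> 'I_K}) (\prod_i F i (f i)) *
     (if (k < \sum_i (f i : nat))%N then 0 else P`_(k - \sum_i (f i : nat))).
Proof.
rewrite bigA_distr_bigA /= mulr_sumr coef_sum; apply: eq_bigr => f _.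
have -> : \prod_i (F i (f i) *: 'X^(f i)) = (\prod_i F i (f i)) *: 'X^(\sum_i (f i : nat)).
  rewrite -prodrXr -mul_polyC rmorph_prod -big_split /=.
  by apply: eq_bigr => i _; rewrite mul_polyC.
by rewrite -scalerAr coefZ coefMXn.
Qed.

Lemma coefAp e j : (Ap e)`_j = (Eulerian e j)%:Z.
Proof.
case: e => [|m]; first by rewrite /Ap coef0 /Eulerian.
rewrite /Ap /Apoly coef_sum /Eulerian /=.
rewrite -sum1_card -natz natr_sum [RHS]big_mkcond /=; apply: eq_bigr => s _.
by rewrite coefXn inE eq_sym; case: (_ == _).
Qed.

Lemma sgnq (a q : nat) : (a <= q)%N -> (-1 : int) ^+ a = (-1) ^+ q * (-1) ^+ (q - a).
Proof.
move=> h; rewrite -{1}(subnK h) exprD mulrAC -exprD addnn -mul2n exprM sqrrN expr1n.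
by rewrite ?expr1n ?mul1r.
Qed.

Theorem proposition3p6 (n r q : nat) (hn : (1 <= n)%N) (hr : (1 <= r)%N)
  (eps : {ffun 'I_r -> 'I_n.+1})
  (heps : (\sum_(i < r) (eps i : nat))%N = n)
  (N : nat) (hN : (q <= N)%N) :
  (-1 : int) ^ (n%:Z - r%:Z) *
    \sum_(s : {ffun 'I_r -> 'I_N.+1})
       ((-1) ^+ (\sum_(i < r) (s i : nat))%N
        * binz n (q%:Z - (\sum_(i < r) (s i : nat))%N%:Z)
        * \prod_(i < r) (((s i).+1)%:Z ^+ (eps i) - (s i : nat)%:Z ^+ (eps i)))
  = (-1 : int) ^ (n%:Z - q%:Z - r%:Z) *
    \sum_(t : {ffun 'I_r -> 'I_q.+1} | (\sum_(i < r) (t i : nat))%N == q)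
       \prod_(i < r) (Eulerian (eps i) (t i))%:Z.
Proof.
have E1 : \sum_(s : {ffun 'I_r -> 'I_N.+1})
       ((-1) ^+ (\sum_(i < r) (s i : nat))%N
        * binz n (q%:Z - (\sum_(i < r) (s i : nat))%N%:Z)
        * \prod_(i < r) (((s i).+1)%:Z ^+ (eps i) - (s i : nat)%:Z ^+ (eps i)))
   = (-1) ^+ q * (((1 - 'X)^+n * \prod_(i < r) Sp N.+1 (eps i))`_q).
  rewrite /Sp (coef_prod_expand (fun i (j : 'I_N.+1) => ((j.+1)%:Z ^+ eps i - (j : nat)%:Z ^+ eps i))).
  rewrite mulr_sumr; apply: eq_bigr => s _.
  set a := (\sum_(i < r) (s i : nat))%N.
  case: (ltnP q a) => hqa.
    rewrite /binz (_ : (q%:Z - a%:Z < 0) = true); last by rewrite subr_lt0 ltz_nat.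
    by rewrite !mulr0 mul0r.
  rewrite /binz subzn //.
  rewrite (_ : ((q - a)%N%:Z < 0) = false) //= coef1X natz.
  rewrite (sgnq hqa); ring.
have E2 : (1 - 'X)^+n * \prod_(i < r) Sp N.+1 (eps i)
    = \prod_(i < r) ((1 - 'X)^+(eps i) * Sp N.+1 (eps i)).
  by rewrite big_split /= prodrXr heps.
have E3 := cong_prod (fun i => coord N (eps i)).
have E4 : (\prod_(i < r) Ap (eps i))`_q =
    \sum_(t : {ffun 'I_r -> 'I_q.+1} | (\sum_(i < r) (t i : nat))%N == q)
       \prod_(i < r) (Eulerian (eps i) (t i))%:Z.
  have C : cong q.+1 (\prod_(i < r) Ap (eps i))
             (\prod_(i < r) \sum_(j < q.+1) (Ap (eps i))`_j *: 'X^j).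
    apply: cong_prod => i; exists (drop_poly q.+1 (Ap (eps i))).
    by rewrite -{1}(poly_take_drop q.+1 (Ap (eps i))) /take_poly poly_def mulrC.
  rewrite (cong_coef C (ltnSn q)) -[\prod_(i < r) \sum_(j < q.+1) _]mul1r coef_prod_expand.
  rewrite [RHS]big_mkcond /=; apply: eq_bigr => t _.
  rewrite coef1.
  case: (ltnP q (\sum_(i < r) (t i : nat))%N) => h.
    by rewrite mulr0 (_ : (_ == q) = false) //; apply/negbTE; rewrite neq_ltn h orbT.
  rewrite subn_eq0 eq_sym eqn_leq h andbT.
  case: (_ <= _)%N; rewrite ?mulr1 ?mulr0 //.
  by apply: eq_bigr => i _; rewrite coefAp.
rewrite E1 E2 (cong_coef E3) ?ltnS // E4.
have sign : (-1 : int) ^ (n%:Z - q%:Z - r%:Z) = (-1) ^ (n%:Z - r%:Z) * (-1) ^+ q.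
  rewrite (_ : n%:Z - q%:Z - r%:Z = (n%:Z - r%:Z) + (- q%:Z)); last by ring.
  by rewrite [LHS](exprzDr (unitrN1 _)) -exprz_inv invrN1.
rewrite sign; ring.
Qed.
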